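(* Let $L'$ be a finite $0$-distributive lattice with exactly $n$ atoms. Then there exists a blow-up $L^B$ of the Boolean lattice $L\cong\mathbf{2}^n$ such that the zero-divisor graphs $G(L')$ and $G(L^B)$ are isomorphic (indeed the chain replacing an element of $L$ has as many elements as the corresponding $\sim$-class of $L'$).
   Context: A lattice $M$ with $0$ is $0$-distributive if $a\wedge b=0$ and $a\wedge c=0$ imply $a\wedge(b\vee c)=0$. For a lattice $M$ with $0$, $a^{\perp}=\{b: a\wedge b=0\}$, $x\sim y$ iff $x^\perp=y^\perp$, $[x]$ is the class of $x$, and $[M]$ is the set of classes ordered by $[a]\le[b]$ iff $b^{\perp}\subseteq a^{\perp}$. The zero-divisor graph $G(M)$ has as vertices the nonzero $a\in M$ with $a\wedge b=0$ for some nonzero $b$, distinct $a,b$ adjacent iff $a\wedge b=0$. Blow-up: for $L\cong\mathbf{2}^n$, replace each $a\in L\setminus\{0,1\}$ by a finite chain $C_a$: $a=a^1\lessdot\cdots\lessdot a^{k_a}$, keep $0,1$; elements in one chain are ordered along it, and for $u\in C_a,v\in C_b$ with $a\ne b$ ($C_0=\{0\},C_1=\{1\}$), $u\le v$ iff $a<b$ in $L$. *)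

(* Defs.v *)
From HB Require Import structures.
From mathcomp Require Import all_boot all_order.
Set Implicit Arguments. Unset Strict Implicit. Unset Printing Implicit Defensive.
Import Order.TTheory.
Local Open Scope order_scope.

Section LatticeDefs.
Context {d : Order.disp_t} {L : finTBLatticeType d}.

Definition perp (a b : L) : bool := a `&` b == \bot.

Definition zero_distributive : Prop :=
  forall a b c : L, perp a b -> perp a c -> perp a (b `|` c).

Definition is_atom (a : L) : bool :=
  (a != \bot) && [forall b : L, (\bot < b) && (b <= a) ==> (b == a)].

Definition sim (x y : L) : bool := [forall z : L, perp x z == perp y z].

Definition cls_le (x y : L) : Prop := forall z : L, perp y z -> perp x z.

Definition cls (x : L) : {set L} := [set y | sim x y].

Definition zd_vertex (a : L) : Prop := a != \bot /\ exists b : L, b != \bot /\ perp a b.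
Definition zd_adj (a b : L) : Prop := a <> b /\ perp a b.
End LatticeDefs.

(* ---------- Blow-up of the Boolean lattice 2^n = {set 'I_n} ----------
   k A is the length of the chain C_A replacing A (for A <> 0,1).
   The element A^(i+1) of C_A is encoded as (A, i) with i < k A;
   0 = (set0, 0), 1 = (setT, 0). *)
Definition bu_valid (n : nat) (k : {set 'I_n} -> nat) (p : {set 'I_n} * nat) : bool :=
  if (p.1 == set0) || (p.1 == setT) then p.2 == 0 else (p.2 < k p.1)%N.

Definition blowup (n : nat) (k : {set 'I_n} -> nat) := {p | bu_valid k p}.

Section BlowupDefs.
Variables (n : nat) (k : {set 'I_n} -> nat).

Definition bu_le (u v : blowup k) : Prop :=
  ((val u).1 = (val v).1 /\ ((val u).2 <= (val v).2)%N)
  \/ ((val u).1 \proper (val v).1).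

Definition bu_is_zero (u : blowup k) : Prop := (val u).1 = set0.

Definition bu_perp (u v : blowup k) : Prop :=
  forall z : blowup k, bu_le z u -> bu_le z v -> bu_is_zero z.

Definition bu_vertex (u : blowup k) : Prop :=
  ~ bu_is_zero u /\ exists v : blowup k, ~ bu_is_zero v /\ bu_perp u v.
Definition bu_adj (u v : blowup k) : Prop := u <> v /\ bu_perp u v.
End BlowupDefs.

(* Main.v *)
Require Import Defs.
From HB Require Import structures.
From mathcomp Require Import all_boot all_order.
Import Order.TTheory.
Set Implicit Arguments. Unset Strict Implicit.

Section BU.
Variables (n : nat) (k : {set 'I_n} -> nat).
Hypothesis kpos : forall A : {set 'I_n}, A != set0 -> A != setT -> (0 < k A)%N.

Lemma bu_le_sub (u v : blowup k) : bu_le u v -> (val u).1 \subset (val v).1.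
Proof. by case=> [[-> _]|/proper_sub]. Qed.

Lemma bu_le_refl (u : blowup k) : bu_le u u.
Proof. by left. Qed.

Lemma bu_perp_disj (u v : blowup k) :
  (val u).1 :&: (val v).1 = set0 -> bu_perp u v.
Proof.
move=> H z /bu_le_sub h1 /bu_le_sub h2; rewrite /bu_is_zero; apply/eqP.
by rewrite -subset0 -H subsetI h1 h2.
Qed.

Lemma bu_perp_meet (u v : blowup k) :
  (val u).1 :&: (val v).1 != set0 -> ~ bu_perp u v.
Proof.
move=> Hne Hp.
have nzu : (val u).1 != set0.
  by apply: contraNneq Hne => ->; rewrite set0I.
have nzv : (val v).1 != set0.
  by apply: contraNneq Hne => ->; rewrite setI0.
case: (boolP ((val u).1 \subset (val v).1)) => Huv.
  case: (eqVneq (val u).1 (val v).1) => Heq.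
    case: (leqP (val u).2 (val v).2) => Hle.
      by apply: (negP nzu); apply/eqP; apply: Hp; [apply: bu_le_refl | left].
    by apply: (negP nzv); apply/eqP; apply: Hp; [left; split; [|apply: ltnW] | apply: bu_le_refl].
  by apply: (negP nzu); apply/eqP; apply: Hp; [apply: bu_le_refl | right; rewrite properEneq Heq].
case: (boolP ((val v).1 \subset (val u).1)) => Hvu.
  by apply: (negP nzv); apply/eqP; apply: Hp; [right; rewrite properE Hvu | apply: bu_le_refl].
set D := (val u).1 :&: (val v).1.
have pDu : D \proper (val u).1.
  rewrite properE subsetIl /=; apply: contra Huv => H.
  by apply: subset_trans H (subsetIr _ _).
have pDv : D \proper (val v).1.
  rewrite properE subsetIr /=; apply: contra Hvu => H.
  by apply: subset_trans H (subsetIl _ _).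
have vD : bu_valid k (D, 0).
  have DT : D != setT.
    apply/eqP => HT; move: pDu; by rewrite HT properE subsetT andbF.
  by rewrite /bu_valid /= (negbTE Hne) (negbTE DT) /=; apply: kpos.
have := Hp (exist (fun p => bu_valid k p) (D, 0) vD); rewrite /bu_is_zero /=.
by move=> H; apply: (negP Hne); apply/eqP; apply: H; right.
Qed.

Lemma bu_perpE (u v : blowup k) :
  bu_perp u v <-> (val u).1 :&: (val v).1 = set0.
Proof.
split; last exact: bu_perp_disj.
by move=> Hp; apply/eqP; apply: contraT => H; case: (bu_perp_meet H).
Qed.

Lemma bu_vertexP (u : blowup k) :
  bu_vertex u <-> ((val u).1 != set0 /\ (val u).1 != setT).
Proof.
split.
  move=> [Hnz [v [Hvnz Hp]]]; split; first by apply/eqP.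
  apply/eqP => HT; apply: (bu_perp_meet _ Hp).
  by rewrite HT setTI; apply/eqP.
move=> [H0 HT]; split; first by move/eqP: H0.
have vC : bu_valid k (~: (val u).1, 0).
  rewrite /bu_valid /=.
  have c0 : ~: (val u).1 != set0.
    by apply: contra HT => /eqP H; rewrite -[(val u).1]setCK H setC0.
  have cT : ~: (val u).1 != setT.
    by apply: contra H0 => /eqP H; rewrite -[(val u).1]setCK H setCT.
  by rewrite (negbTE c0) (negbTE cT) /=; apply: kpos.
exists (exist (fun p => bu_valid k p) _ vC); split.
  rewrite /bu_is_zero /= => /eqP; apply/negP.
  by apply: contra HT => /eqP H; rewrite -[(val u).1]setCK H setC0.
by apply: bu_perp_disj; rewrite /= setICr.
Qed.
End BU.

Local Open Scope order_scope.

Section Lat.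
Context {d : Order.disp_t} {L : finTBLatticeType d}.

Lemma atom_nz (a : L) : is_atom a -> a != \bot.
Proof. by case/andP. Qed.

Lemma atom_le (a x : L) : is_atom a -> (a <= x) || (a `&` x == \bot).
Proof.
move=> /andP [Ha /forallP H]; have := H (a `&` x).
rewrite leIl andbT lt0x.
case: (eqVneq (a `&` x) \bot) => [->|Hne]; first by rewrite orbT.
by move=> /= /eqP E; rewrite leEmeet E eqxx.
Qed.

Lemma atom_below (x : L) : x != \bot -> exists2 a, is_atom a & a <= x.
Proof.
have [m Hm] : exists m, (#|[set y : L | (y < x)%O]| < m)%N by exists #|[set y : L | (y < x)%O]|.+1.
elim: m x Hm => [|m IH] x Hm Hx; first by [].
case Hat: (is_atom x); first by exists x.
move/negbT: Hat; rewrite /is_atom Hx /= negb_forall => /existsP [b].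
rewrite negb_imply => /andP [/andP [Hb0 Hbx] Hbne].
have Hbx' : b < x by rewrite lt_neqAle Hbne Hbx.
have Hsub : [set y : L | (y < b)%O] \proper [set y : L | (y < x)%O].
  apply/properP; split.
    by apply/subsetP => y; rewrite !inE => Hy; apply: lt_trans Hy Hbx'.
  by exists b; rewrite !inE ?ltxx.
have Hb : b != \bot by rewrite -lt0x.
have [a Ha Hab] := IH b (leq_trans (proper_card Hsub) (ltnSE Hm)) Hb.
by exists a => //; apply: le_trans Hab Hbx.
Qed.

Lemma setI1_eq0 (T : finType) (A : {set T}) i : (A :&: [set i] == set0) = (i \notin A).
Proof.
apply/eqP/idP => [H|H].
  apply/negP => Hi; have : i \in A :&: [set i] by rewrite !inE Hi eqxx.
  by rewrite H inE.
apply/setP => j; rewrite !inE; apply/negbTE; apply/andP => -[Hj /eqP E].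
by subst; rewrite Hj in H.
Qed.

Definition At : {set L} := [set a | is_atom a].
Definition e (i : 'I_#|At|) : L := enum_val i.

Lemma e_atom i : is_atom (e i).
Proof. by have := enum_valP i; rewrite inE. Qed.

Lemma atom_e a : is_atom a -> exists i, e i = a.
Proof.
move=> Ha; have Ha' : a \in At by rewrite inE.
by exists (enum_rank_in Ha' a); rewrite /e enum_rankK_in.
Qed.

Definition phi (x : L) : {set 'I_#|At|} := [set i | e i <= x].

Lemma e_le_e i j : e i <= e j -> i = j.
Proof.
move=> H; have /andP [_ /forallP Hj] := e_atom j.
have := Hj (e i); rewrite H andbT lt0x (atom_nz (e_atom i)) /= => /eqP.
exact: enum_val_inj.
Qed.

Lemma phi_e i : phi (e i) = [set i].
Proof.
apply/setP => j; rewrite !inE; apply/idP/eqP => [/e_le_e //| ->]; exact: lexx.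
Qed.

Lemma perpE x y : perp x y = (phi x :&: phi y == set0).
Proof.
rewrite /perp; apply/idP/idP.
  move/eqP => H; apply/eqP/setP => i; rewrite !inE; apply/negP => /andP [h1 h2].
  have : e i <= x `&` y by rewrite lexI h1 h2.
  by rewrite H lex0 (negbTE (atom_nz (e_atom i))).
move=> H; apply: contraT => Hne.
have [a Ha Hal] := atom_below Hne; have [i Hi] := atom_e Ha; subst a.
move/eqP/setP: H => /(_ i); rewrite !inE -lexI Hal //.
Qed.

Lemma phi0 x : (phi x == set0) = (x == \bot).
Proof.
apply/idP/idP.
  move=> H; apply: contraT => Hne; have [a Ha Hax] := atom_below Hne.
  have [i Hi] := atom_e Ha; subst a.
  by move/eqP/setP: H => /(_ i); rewrite !inE Hax.
move/eqP->; apply/eqP/setP => i; rewrite !inE lex0.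
exact: (negbTE (atom_nz (e_atom i))).
Qed.

Lemma simE x y : sim x y <-> phi x = phi y.
Proof.
rewrite /sim; split; last by move=> E; apply/forallP => z; rewrite !perpE E.
move/forallP => H; apply/setP => i; have := H (e i).
rewrite !perpE phi_e !setI1_eq0.
by case: (i \in phi x); case: (i \in phi y).
Qed.

Lemma cls_leE x y : cls_le x y <-> phi x \subset phi y.
Proof.
split.
  move=> H; apply/subsetP => i Hi; have := H (e i).
  rewrite !perpE phi_e !setI1_eq0 Hi => H'.
  by apply: contraT => /H'.
move=> H z; rewrite !perpE -!subset0 => H'.
by apply: subset_trans H'; apply: setSI.
Qed.

Lemma phi_surj : zero_distributive (L := L) -> forall A, exists x, phi x = A.
Proof.
move=> zd A; exists (\join_(i in A) e i); apply/setP => j; rewrite inE.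
apply/idP/idP; last by move=> HA; apply: joins_sup.
move=> Hj; apply: contraT => HjA.
have P : perp (e j) (\join_(i in A) e i).
  apply: (big_ind (perp (e j))).
  - by rewrite /perp meetx0.
  - by move=> a b; apply: zd.
  - move=> i Hi; rewrite perpE !phi_e setI1_eq0 inE.
    by apply: contra HjA => /eqP <-.
move: P; rewrite /perp (meet_l Hj).
by rewrite (negbTE (atom_nz (e_atom j))).
Qed.

End Lat.

Close Scope order_scope.
From Stdlib Require Import ClassicalEpsilon ProofIrrelevance.

Lemma sig_eqP (T : Type) (P : T -> Prop) (a b : sig P) :
  proj1_sig a = proj1_sig b -> a = b.
Proof.
case: a b => [a ha] [b hb] /= E; subst b; f_equal; apply: proof_irrelevance.
Qed.

Theorem mainTheorem4 (d : Order.disp_t) (L : finTBLatticeType d) (n : nat) :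
  zero_distributive (L := L) ->
  #|[set a : L | is_atom a]| = n ->
  exists k : {set 'I_n} -> nat,
    (* k defines a blow-up: every chain is nonempty *)
    (forall A : {set 'I_n}, A != set0 -> A != setT -> 0 < k A) /\
    (* G(L) and G(L^B) are isomorphic *)
    (exists f : {x : L | zd_vertex x} -> {u : blowup k | bu_vertex u},
        bijective f /\
        forall x y : {x : L | zd_vertex x}, zd_adj (proj1_sig x) (proj1_sig y) <-> bu_adj (proj1_sig (f x)) (proj1_sig (f y))) /\
    (* the chain replacing a in 2^n has as many elements as the corresponding
       ~-class of L, via an order isomorphism [L] ~= 2^n *)
    (exists phi : L -> {set 'I_n},
        (forall x y : L, phi x = phi y <-> sim x y) /\
        (forall A : {set 'I_n}, exists x : L, phi x = A) /\
        (forall x y : L, phi x \subset phi y <-> cls_le x y) /\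
        (forall x : L, phi x != set0 -> phi x != setT ->
                       k (phi x) = #|cls x|)).
Proof.
move=> zd Hn; subst n.
pose k (A : {set 'I_#|At (L:=L)|}) := #|[set y : L | phi y == A]|.
pose idx (x : L) := index x (enum [set y : L | phi y == phi x]).
have kpos : forall A : {set 'I_#|At (L:=L)|}, A != set0 -> A != setT -> 0 < k A.
  move=> A _ _; have [x Hx] := phi_surj zd A.
  by rewrite /k card_gt0; apply/set0Pn; exists x; rewrite inE Hx eqxx.
exists k; split; first exact: kpos.
have vert : forall x : L, zd_vertex x <-> (phi x != set0 /\ phi x != setT).
  move=> x; rewrite /zd_vertex phi0; split.
    move=> [Hx [y [Hy Hp]]]; split => //; apply/eqP => HT.
    by move: Hp; rewrite perpE HT setTI phi0 (negbTE Hy).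
  move=> [Hx HT]; split => //.
  have /subsetPn [i _ Hi] : ~~ (setT \subset phi x) by rewrite subTset.
  exists (e i); split; first exact: atom_nz (e_atom i).
  by rewrite perpE phi_e setI1_eq0.
have idx_lt : forall x : L, idx x < k (phi x).
  by move=> x; rewrite /idx /k (cardE [set y : L | phi y == phi x]) index_mem mem_enum inE.
have Fvalid : forall x, zd_vertex x -> bu_valid k (phi x, idx x).
  move=> x /vert [H0 HT]; rewrite /bu_valid /= (negbTE H0) (negbTE HT) /=.
  exact: idx_lt.
have Fvert : forall x (h : zd_vertex x),
    bu_vertex (exist (fun p => bu_valid k p) (phi x, idx x) (Fvalid x h)).
  by move=> x h; apply/(bu_vertexP kpos); apply/vert.
pose f := fun x : {x : L | zd_vertex x} =>
  exist (fun u => bu_vertex u) _ (Fvert _ (proj2_sig x)).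
have F_inj : forall x y : L, phi x = phi y -> idx x = idx y -> x = y.
  move=> x y Ep Ei.
  have hx : x \in enum [set z | phi z == phi x] by rewrite mem_enum inE.
  have hy : y \in enum [set z | phi z == phi x] by rewrite mem_enum inE Ep.
  rewrite -(nth_index \bot%O hx) -(nth_index \bot%O hy); congr nth.
  by move: Ei; rewrite /idx -Ep.
have f_inj : injective f.
  move=> x y /(congr1 (fun u => val (proj1_sig u))) /= [Ep Ei].
  by apply: sig_eqP; apply: F_inj.
have f_surj : forall u, exists x, f x = u.
  move=> [[[A i] hp] hv].
  have [H0 HT] := (bu_vertexP kpos _).1 hv; move: H0 HT => /= H0 HT.
  have hi : i < k A by move: (hp); rewrite /bu_valid /= (negbTE H0) (negbTE HT).
  set s := enum [set y : L | phi y == A].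
  have hs : i < size s by rewrite /s -(cardE [set y : L | phi y == A]).
  have hxs := mem_nth \bot%O hs; move: (hxs); rewrite mem_enum inE => /eqP Hx.
  have hvx : zd_vertex (nth \bot%O s i) by apply/vert; rewrite Hx.
  exists (exist _ _ hvx); apply: sig_eqP; apply: val_inj => /=.
  rewrite /idx Hx index_uniq //; exact: enum_uniq.
split.
  exists f; split.
    pose g := fun u => proj1_sig (constructive_indefinite_description _ (f_surj u)).
    have gK : cancel g f.
      by move=> u; rewrite /g; case: constructive_indefinite_description.
    exists g => //; move=> x; apply: f_inj; exact: gK.
  move=> x y; rewrite /zd_adj /bu_adj bu_perpE // /= perpE.
  split.
    move=> [Hne /eqP Hp]; split => // E; apply: Hne.
    move: E => /(congr1 val) /= [Ep Ei]; exact: F_inj.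
  move=> [Hne Hp]; split; last by apply/eqP.
  by move=> E; apply: Hne; rewrite /f; move: (proj2_sig x) (proj2_sig y); rewrite E => ??; congr exist; apply: proof_irrelevance.
exists phi; split.
  by move=> x y; rewrite simE.
split; first exact: phi_surj.
split; first by move=> x y; rewrite cls_leE.
move=> x _ _; rewrite /k /cls; apply: eq_card => y; rewrite !inE.
by apply/eqP/idP => [E|/simE ->]; [apply/simE|].
Qed.
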